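(* Let $(h_k)_{k\ge1}$ be the Narayana sequence and let $\alpha$ be the real root of $x^3+x=1$. Then $\|\alpha h_k\|$ decreases exponentially as $k\to\infty$, i.e. there are constants $C>0$ and $0<\rho<1$ with $\|\alpha h_k\|\le C\rho^k$ for all $k$. The same holds with $\alpha$ replaced by any $\beta\in\mathbb{Z}[\alpha]$.
   Context: The Narayana sequence is defined by $h_1=1$, $h_2=2$, $h_3=3$ and $h_k=h_{k-1}+h_{k-3}$ for $k>3$. For real $x$, $\|x\|$ denotes the distance from $x$ to the nearest integer. *)

(* Defs.v *)
From Stdlib Require Import Reals ZArith List.
Open Scope R_scope.

(* nara n = h_(n+1): h_1 = 1, h_2 = 2, h_3 = 3, h_k = h_(k-1) + h_(k-3). *)
Fixpoint nara (n : nat) : nat :=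
  match n with
  | O => 1
  | S O => 2
  | S (S O) => 3
  | S (S (S m) as p) => (nara p + nara m)%nat
  end.

Definition narayana (k : nat) : nat := nara (k - 1).

Definition dist_nint (x : R) : R := Rmin (frac_part x) (1 - frac_part x).

(* beta belongs to Z[alpha]: beta = p(alpha) for some integer polynomial p,
   given by its coefficient list (constant term first, Horner evaluation). *)
Definition Zpoly_eval (alpha : R) (l : list Z) : R :=
  fold_right (fun c acc => IZR c + alpha * acc) 0 l.

Definition in_Z_adjoin (alpha beta : R) : Prop :=
  exists l : list Z, beta = Zpoly_eval alpha l.

(* Main.v *)
Require Import Defs.
From Stdlib Require Import Reals ZArith List Lra Lia Psatz.
Open Scope R_scope.

Definition ee (a : R) (n : nat) : R := a * INR (nara (S n)) - INR (nara n).

Lemma nara_rec n : nara (S (S (S n))) = (nara (S (S n)) + nara n)%nat.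
Proof. reflexivity. Qed.

Lemma a_bounds a (ha : a ^ 3 + a = 1) : 0 < a < 1.
Proof. split; nra. Qed.

Lemma ee_rec a (ha : a ^ 3 + a = 1) n :
  ee a (S (S n)) = - a ^ 2 * ee a (S n) - a * ee a n.
Proof.
  unfold ee. rewrite nara_rec, plus_INR.
  set (h2 := INR (nara (S (S n)))). set (h1 := INR (nara (S n))).
  set (h0 := INR (nara n)).
  assert (H : a * (h2 + h0) - h2 - (- a ^ 2 * (a * h2 - h1) - a * (a * h1 - h0))
              = h2 * (a ^ 3 + a - 1)) by ring.
  replace (a ^ 3 + a - 1) with 0 in H by lra.
  rewrite Rmult_0_r in H. lra.
Qed.

Definition QQ a n := ee a (S n) ^ 2 + a ^ 2 * ee a n * ee a (S n) + a * ee a n ^ 2.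

Lemma QQ_step a (ha : a ^ 3 + a = 1) n : QQ a (S n) = a * QQ a n.
Proof. unfold QQ. rewrite (ee_rec a ha n). ring. Qed.

Lemma QQ_pow a (ha : a ^ 3 + a = 1) n : QQ a n = a ^ n * QQ a 0.
Proof.
  induction n as [|n IH]. simpl; ring.
  rewrite QQ_step by exact ha. rewrite IH. simpl. ring.
Qed.

Lemma ee_sq a (ha : a ^ 3 + a = 1) n : 3 * a / 4 * ee a n ^ 2 <= QQ a n.
Proof.
  destruct (a_bounds a ha) as [h0 h1].
  unfold QQ. set (x := ee a n). set (y := ee a (S n)).
  assert (H : y ^ 2 + a ^ 2 * x * y + a * x ^ 2
     = (y + a ^ 2 * x / 2) ^ 2 + (a - a ^ 4 / 4) * x ^ 2) by (unfold Rdiv; ring_simplify; field).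
  rewrite H.
  assert (a ^ 4 <= a) by nra.
  assert (0 <= (y + a ^ 2 * x / 2) ^ 2) by apply pow2_ge_0.
  assert (0 <= x ^ 2) by apply pow2_ge_0.
  nra.
Qed.

Definition rho a := (1 + a) / 2.

Lemma ee_bound a (ha : a ^ 3 + a = 1) :
  exists K, 0 <= K /\ forall n, Rabs (ee a n) <= K * rho a ^ n.
Proof.
  destruct (a_bounds a ha) as [h0 h1].
  set (K0 := 4 / (3 * a) * Rabs (QQ a 0)).
  assert (HK0 : 0 <= K0).
  { unfold K0. apply Rmult_le_pos. apply Rlt_le. apply Rdiv_lt_0_compat; lra.
    apply Rabs_pos. }
  exists (K0 + 1). split. lra. intro n.
  assert (Hr : 0 < rho a ^ n). { apply pow_lt. unfold rho; lra. }
  assert (Ha : a ^ n <= (rho a ^ n) ^ 2).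
  { rewrite <- pow_mult. rewrite Nat.mul_comm, pow_mult. apply pow_incr. split. lra.
    unfold rho. nra. }
  assert (Han : 0 < a ^ n) by (apply pow_lt; lra).
  assert (Hsq : ee a n ^ 2 <= K0 * a ^ n).
  { pose proof (ee_sq a ha n). rewrite QQ_pow in H by exact ha.
    unfold K0.
    assert (QQ a 0 <= Rabs (QQ a 0)) by apply Rle_abs.
    assert (a ^ n * QQ a 0 <= a ^ n * Rabs (QQ a 0)) by nra.
    assert (ee a n ^ 2 <= 4 / (3 * a) * (a ^ n * Rabs (QQ a 0))).
    { apply (Rmult_le_reg_l (3 * a / 4)). nra.
      replace (3 * a / 4 * (4 / (3 * a) * (a ^ n * Rabs (QQ a 0))))
        with (a ^ n * Rabs (QQ a 0)) by (field; lra). lra. }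
    nra. }
  assert (Hs2 : ee a n ^ 2 <= ((K0 + 1) * rho a ^ n) ^ 2).
  { assert (K0 * a ^ n <= K0 * (rho a ^ n) ^ 2) by nra.
    assert (K0 <= (K0 + 1) ^ 2) by nra. 
    assert (K0 * (rho a ^ n) ^ 2 <= (K0 + 1) ^ 2 * (rho a ^ n) ^ 2) by nra.
    replace (((K0 + 1) * rho a ^ n) ^ 2) with ((K0 + 1) ^ 2 * (rho a ^ n) ^ 2) by ring.
    lra. }
  assert (Hab : Rabs (ee a n) ^ 2 = ee a n ^ 2) by (rewrite <- (pow2_abs (ee a n)); reflexivity).
  assert (0 <= Rabs (ee a n)) by apply Rabs_pos.
  assert (0 <= (K0 + 1) * rho a ^ n) by nra.
  nra.
Qed.

Definition PP a (b : R) : Prop := exists (N : nat -> Z) (C : R),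
  forall n, Rabs (b * INR (nara n) - IZR (N n)) <= C * rho a ^ n.

Lemma PP_const a (ha : a ^ 3 + a = 1) c : PP a (IZR c).
Proof.
  exists (fun n => (c * Z.of_nat (nara n))%Z), 0. intro n.
  rewrite mult_IZR, <- INR_IZR_INZ.
  replace (IZR c * INR (nara n) - IZR c * INR (nara n)) with 0 by ring.
  rewrite Rabs_R0. lra.
Qed.

Lemma PP_add a b1 b2 : PP a b1 -> PP a b2 -> PP a (b1 + b2).
Proof.
  intros [N1 [C1 H1]] [N2 [C2 H2]].
  exists (fun n => (N1 n + N2 n)%Z), (C1 + C2). intro n.
  rewrite plus_IZR.
  replace ((b1 + b2) * INR (nara n) - (IZR (N1 n) + IZR (N2 n))) with
    ((b1 * INR (nara n) - IZR (N1 n)) + (b2 * INR (nara n) - IZR (N2 n))) by ring.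
  eapply Rle_trans. apply Rabs_triang.
  specialize (H1 n). specialize (H2 n). lra.
Qed.

Lemma PP_mul a (ha : a ^ 3 + a = 1) b : PP a b -> PP a (a * b).
Proof.
  intros [N [C H]].
  destruct (a_bounds a ha) as [h0 h1].
  destruct (ee_bound a ha) as [K [HK HKb]].
  assert (Hr : 0 < rho a) by (unfold rho; lra).
  exists (fun n => match n with O => 0%Z | S m => N m end),
    ((Rabs C + Rabs b * K) / rho a + Rabs (a * b)).
  assert (HX : 0 <= (Rabs C + Rabs b * K) / rho a).
  { apply Rmult_le_pos. assert (0 <= Rabs C) by apply Rabs_pos.
    assert (0 <= Rabs b) by apply Rabs_pos. nra.
    apply Rlt_le, Rinv_0_lt_compat; lra. }
  intros [|n].
  - simpl. replace (a * b * 1 - 0) with (a * b) by ring.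
    assert (0 <= Rabs (a * b)) by apply Rabs_pos. lra.
  - assert (Ht : 0 < rho a ^ n) by (apply pow_lt; lra).
    set (t := rho a ^ n) in *.
    change (rho a ^ S n) with (rho a * rho a ^ n). fold t.
    assert (E : a * INR (nara (S n)) = INR (nara n) + ee a n) by (unfold ee; ring).
    replace (a * b * INR (nara (S n)) - IZR (N n)) with
      ((b * INR (nara n) - IZR (N n)) + b * ee a n)
      by (unfold ee; ring).
    eapply Rle_trans. apply Rabs_triang.
    rewrite Rabs_mult.
    specialize (H n). specialize (HKb n). fold t in H, HKb.
    assert (C * t <= Rabs C * t).
    { apply Rmult_le_compat_r. lra. apply Rle_abs. }
    assert (Rabs b * Rabs (ee a n) <= Rabs b * (K * t)).
    { apply Rmult_le_compat_l. apply Rabs_pos. exact HKb. }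
    replace (((Rabs C + Rabs b * K) / rho a + Rabs (a * b)) * (rho a * t))
      with ((Rabs C + Rabs b * K) * t + Rabs (a * b) * rho a * t) by (field; lra).
    assert (0 <= Rabs (a * b) * rho a * t).
    { apply Rmult_le_pos. apply Rmult_le_pos. apply Rabs_pos. lra. lra. }
    nra.
Qed.

Lemma PP_poly a (ha : a ^ 3 + a = 1) l : PP a (Zpoly_eval a l).
Proof.
  induction l as [|c l IH]; simpl.
  - apply (PP_const a ha 0%Z).
  - apply PP_add. apply PP_const; exact ha. apply PP_mul; assumption.
Qed.

Lemma dist_le x z : dist_nint x <= Rabs (x - IZR z).
Proof.
  unfold dist_nint, frac_part.
  pose proof (base_Int_part x) as [B1 B2].
  set (m := Int_part x) in *.
  destruct (Z_le_gt_dec z m) as [Hz|Hz].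
  - apply IZR_le in Hz.
    eapply Rle_trans. apply Rmin_l.
    rewrite Rabs_right; lra.
  - assert (Hz' : (m + 1 <= z)%Z) by lia. apply IZR_le in Hz'.
    rewrite plus_IZR in Hz'.
    eapply Rle_trans. apply Rmin_r.
    rewrite Rabs_left; lra.
Qed.

Theorem mainTheorem3 (alpha : R) (halpha : alpha ^ 3 + alpha = 1) :
  (exists C rho : R, 0 < C /\ 0 < rho < 1 /\
     forall k : nat, (1 <= k)%nat ->
       dist_nint (alpha * INR (narayana k)) <= C * rho ^ k) /\
  (forall beta : R, in_Z_adjoin alpha beta ->
     exists C rho : R, 0 < C /\ 0 < rho < 1 /\
       forall k : nat, (1 <= k)%nat ->
         dist_nint (beta * INR (narayana k)) <= C * rho ^ k).
Proof.
  destruct (a_bounds alpha halpha) as [h0 h1].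
  assert (Hr : 0 < rho alpha < 1) by (unfold rho; lra).
  assert (gen : forall beta : R, in_Z_adjoin alpha beta ->
     exists C rho : R, 0 < C /\ 0 < rho < 1 /\
       forall k : nat, (1 <= k)%nat ->
         dist_nint (beta * INR (narayana k)) <= C * rho ^ k).
  { intros beta [l ->].
    destruct (PP_poly alpha halpha l) as [N [C H]].
    exists ((Rabs C + 1) / rho alpha), (rho alpha).
    split. apply Rdiv_lt_0_compat. pose proof (Rabs_pos C). lra. lra.
    split. exact Hr.
    intros [|m] Hk. lia.
    unfold narayana. replace (S m - 1)%nat with m by lia.
    eapply Rle_trans. apply (dist_le _ (N m)).
    eapply Rle_trans. apply H.
    assert (Ht : 0 < rho alpha ^ m) by (apply pow_lt; lra).
    change (rho alpha ^ S m) with (rho alpha * rho alpha ^ m).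
    replace ((Rabs C + 1) / rho alpha * (rho alpha * rho alpha ^ m))
      with ((Rabs C + 1) * rho alpha ^ m) by (field; lra).
    apply Rmult_le_compat_r. lra. pose proof (Rle_abs C). lra. }
  split; [|exact gen].
  apply gen. exists (0%Z :: 1%Z :: nil). simpl. ring.
Qed.
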